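(* Consider the scalar system $\dot x(t)=\Big(\frac{1}{1+t+x(t)^2}-t|\cos t|\Big)x(t)$, $t\in[0,\infty)$. Every solution satisfies $$|x(t)|\le\exp\Big(\ln\big(1+\tfrac{3\pi}{2}\big)+1\Big)\exp\Big(-\frac{2}{3\pi}(t-t_0)\Big)|x(t_0)|,\qquad\forall t\ge t_0\ge0;$$ in particular the system is globally uniformly exponentially stable.
   Context: Globally uniformly exponentially stable: there exist constants $\theta>0$, $\alpha>0$ with $|x(t)|\le\theta|x(t_0)|e^{-\alpha(t-t_0)}$ for all $t\ge t_0$ and all solutions. *)

(* Defs.v *)
From Stdlib Require Import Reals.
Open Scope R_scope.

Definition rhs (t y : R) : R := (/ (1 + t + y ^ 2) - t * Rabs (cos t)) * y.

Definition is_solution (f : R -> R -> R) (x : R -> R) (t0 : R) : Prop :=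
  (forall t, t0 <= t -> limit1_in x (fun s => t0 <= s) (x t) t) /\
  (forall t, t0 < t -> derivable_pt_lim x t (f t (x t))).

Definition GUES (f : R -> R -> R) : Prop :=
  exists theta alpha : R, 0 < theta /\ 0 < alpha /\
    forall (x : R -> R) (t0 : R), 0 <= t0 -> is_solution f x t0 ->
      forall t, t0 <= t -> Rabs (x t) <= theta * Rabs (x t0) * exp (- alpha * (t - t0)).

(* Main.v *)
From Stdlib Require Import Reals Lra Psatz.
From Coquelicot Require Import Coquelicot.
Require Import Defs.
Open Scope R_scope.
Definition P (s:R) := s^2/4 + s*sin(2*s)/4 + cos(2*s)/8.
Definition G s := ln(1+s) - P s.
Lemma ln_le x y : 0 < x -> x <= y -> ln x <= ln y.
Proof. intros H [H1|H1]. left; apply ln_increasing; auto. subst; lra. Qed.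

Lemma ln_diff t0 t : 0 <= t0 <= t -> ln (1+t) - ln (1+t0) <= t - t0.
Proof.
  intros [H0 H1].
  assert (E: ln ((1+t0) * exp (t-t0)) = ln (1+t0) + (t - t0)).
  { rewrite ln_mult; [|lra|apply exp_pos]. rewrite ln_exp. ring. }
  assert (ln (1+t) <= ln ((1+t0) * exp (t-t0))).
  { apply ln_le; [lra|].
    assert (1 + (t-t0) <= exp (t-t0)).
    { destruct (Req_dec (t-t0) 0) as [e|e]. rewrite e, exp_0; lra.
      left; apply exp_ineq1; lra. }
    nra. }
  lra.
Qed.

Lemma sin_diff t0 t : 0 <= t0 <= t -> sin (2*t) - sin (2*t0) >= -2*(t-t0).
Proof.
  intros [H0 H1].
  destruct (Rle_lt_dec 1 (t - t0)).
  - pose proof (SIN_bound (2*t)); pose proof (SIN_bound (2*t0)); lra.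
  - rewrite form4.
    replace ((2*t - 2*t0)/2) with (t - t0) by field.
    pose proof (COS_bound ((2 * t + 2 * t0) / 2)).
    destruct (Req_dec t t0) as [e|e].
    + subst. replace (t0-t0) with 0 by ring. rewrite sin_0. lra.
    + pose proof PI2_3_2.
      assert (0 < sin (t-t0)) by (apply sin_gt_0; lra).
      assert (sin (t-t0) < t - t0) by (apply sin_lt_x; lra).
      nra.
Qed.

Lemma ln_big : 3/2 <= ln (1 + 3*PI/2).
Proof.
  pose proof PI2_3_2.
  assert (exp (1/2) * exp (1/2) = exp 1) by (rewrite <- exp_plus; f_equal; field).
  pose proof exp_le_3. pose proof (exp_pos (1/2)).
  assert (exp (1/2) <= 7/4) by nra.
  assert (exp (3/2) <= 1 + 3*PI/2).
  { replace (3/2) with (1 + 1/2) by field. rewrite exp_plus. nra. }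
  rewrite <- (ln_exp (3/2)). apply ln_le; [apply exp_pos|assumption].
Qed.

Lemma G_bound t0 t : 0 <= t0 <= t ->
  G t - G t0 + 2/(3*PI) * (t - t0) <= ln (1 + 3*PI/2) + 1.
Proof.
  intros H.
  pose proof (ln_diff _ _ H). pose proof (sin_diff _ _ H). pose proof ln_big.
  pose proof PI2_3_2.
  assert (2/(3*PI) <= 2/9).
  { apply Rmult_le_compat_l; [lra|]. apply Rinv_le_contravar; lra. }
  assert (0 <= 2/(3*PI)).
  { unfold Rdiv; apply Rmult_le_pos; [lra|]. left; apply Rinv_0_lt_compat; lra. }
  pose proof (SIN_bound (2*t)). pose proof (COS_bound (2*t)). pose proof (COS_bound (2*t0)).
  unfold G, P.
  set (s1 := sin (2*t)) in *. set (s0 := sin (2*t0)) in *.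
  set (c1 := cos (2*t)) in *. set (c0 := cos (2*t0)) in *.
  set (c := 2/(3*PI)) in *.
  set (L := ln (1 + 3*PI/2)) in *.
  assert ((t-t0)*(s1+1) >= 0) by nra.
  assert (t0*(s1 - s0 + 2*(t-t0)) >= 0) by nra.
  assert (c * (t-t0) <= 2/9 * (t-t0)) by (apply Rmult_le_compat_r; lra).
  assert (((t-t0)/2 - 14723/10000)^2 >= 0) by (apply Rle_ge, pow2_ge_0).
  nra.
Qed.
Lemma G_der s : 0 <= s -> is_derive G s (/(1+s) - s*(cos s)^2).
Proof.
  intros Hs. unfold G, P. auto_derive. lra.
  rewrite cos_2a_cos. field. lra.
Qed.

Lemma is_derive_eq (f : R -> R) x l l' : is_derive f x l -> l = l' -> is_derive f x l'.
Proof. intros H e; subst; exact H. Qed.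

Lemma W_der (x : R -> R) c : 0 <= c -> derivable_pt_lim x c (rhs c (x c)) ->
  is_derive (fun u => x u ^ 2 * exp (-2 * G u)) c
   (2 * x c * rhs c (x c) * exp (-2 * G c) + x c ^ 2 * (exp (-2 * G c) * (-2 * (/(1+c) - c*(cos c)^2)))).
Proof.
  intros Hc Hx. apply is_derive_Reals in Hx.
  pose proof (G_der c Hc).
  eapply is_derive_eq.
  apply (is_derive_mult (fun u => x u ^ 2) (fun u => exp (-2 * G u))).
  - apply (is_derive_comp (fun y => y ^ 2) x); [|exact Hx].
    auto_derive; auto.
  - apply (is_derive_comp exp (fun u => -2 * G u)).
    + auto_derive; auto.
    + apply (is_derive_scal (fun u => G u)). exact H.
  - intros; apply Rmult_comm.
  - unfold scal, mult, plus; simpl. unfold mult; simpl. ring.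
Qed.

Lemma E_der c : 0 <= c ->
  is_derive (fun u => exp (-2 * G u)) c (exp (-2 * G c) * (-2 * (/(1+c) - c*(cos c)^2))).
Proof.
  intros Hc. pose proof (G_der c Hc).
  eapply is_derive_eq.
  apply (is_derive_comp exp (fun u => -2 * G u)).
  + auto_derive; auto.
  + apply (is_derive_scal (fun u => G u)). exact H.
  + unfold scal, mult; simpl. unfold mult; simpl. ring.
Qed.

Lemma Wp_nonpos c y : 0 <= c ->
  2 * y * rhs c y * exp (-2 * G c) + y ^ 2 * (exp (-2 * G c) * (-2 * (/(1+c) - c*(cos c)^2))) <= 0.
Proof.
  intros Hc. unfold rhs.
  set (e := exp (-2 * G c)). assert (0 < e) by apply exp_pos.
  assert (/ (1 + c + y ^ 2) <= / (1 + c)).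
  { apply Rinv_le_contravar; [lra|]. pose proof (pow2_ge_0 y); lra. }
  assert (cos c ^ 2 <= Rabs (cos c)).
  { rewrite <- pow2_abs. pose proof (Rabs_pos (cos c)).
    pose proof (COS_bound (cos c)). assert (Rabs (cos c) <= 1).
    { apply Rabs_le. apply COS_bound. } nra. }
  assert (0 <= y^2) by apply pow2_ge_0.
  replace (2 * y * ((/ (1 + c + y ^ 2) - c * Rabs (cos c)) * y) * e +
           y ^ 2 * (e * (-2 * (/ (1 + c) - c * cos c ^ 2))))
    with (2 * (y^2 * e) * ((/ (1 + c + y ^ 2) - / (1 + c)) + c * (cos c ^ 2 - Rabs (cos c)))) by ring.
  assert (0 <= y^2 * e) by nra.
  assert (c * (cos c ^ 2 - Rabs (cos c)) <= 0) by nra.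
  nra.
Qed.

Definition W (x : R -> R) u := x u ^ 2 * exp (-2 * G u).

Lemma mono x t0 s t : 0 <= t0 -> is_solution rhs x t0 -> t0 < s <= t -> W x t <= W x s.
Proof.
  intros H0 [_ Hd] [Hs Hst].
  destruct (Req_dec s t) as [e|ne]. subst; lra.
  destruct (MVT_cor2 (W x) (fun c => 2 * x c * rhs c (x c) * exp (-2 * G c) + x c ^ 2 * (exp (-2 * G c) * (-2 * (/(1+c) - c*(cos c)^2)))) s t) as [c [Hc Hc2]].
  - lra.
  - intros c Hc. apply is_derive_Reals. apply W_der; [lra|]. apply Hd; lra.
  - pose proof (Wp_nonpos c (x c) ltac:(lra)). nra.
Qed.

Lemma cont_lim f D x0 : continuity_pt f x0 -> limit1_in f D (f x0) x0.
Proof.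
  unfold continuity_pt, continue_in, limit1_in, limit_in. intros H eps He.
  destruct (H eps He) as [a [Ha Hb]]. exists a; split; auto.
  intros y [_ Hy]. destruct (Req_dec y x0) as [e|e].
  - subst. simpl. rewrite Rdist_eq. lra.
  - apply Hb. split; [split; [exact I| auto] | auto].
Qed.

Lemma lim_ge (h : R -> R) t0 t K : t0 < t -> limit1_in h (fun s => t0 <= s) (h t0) t0 ->
  (forall s, t0 < s <= t -> K <= h s) -> K <= h t0.
Proof.
  intros Ht Hl Hk. destruct (Rle_lt_dec K (h t0)) as [|Hlt]; auto.
  destruct (Hl (K - h t0) ltac:(lra)) as [a [Ha Hb]].
  set (s := t0 + Rmin a (t - t0) / 2).
  assert (0 < Rmin a (t-t0)) by (apply Rmin_pos; lra).
  assert (Rmin a (t-t0) <= a) by apply Rmin_l.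
  assert (Rmin a (t-t0) <= t - t0) by apply Rmin_r.
  specialize (Hb s). simpl in Hb. unfold Rdist in Hb.
  assert (Rabs (h s - h t0) < K - h t0).
  { apply Hb. split. unfold s; lra. unfold s. rewrite Rabs_right; lra. }
  specialize (Hk s ltac:(unfold s; lra)).
  apply Rabs_def2 in H2. lra.
Qed.

Lemma part1 : forall (x : R -> R) (t0 : R), 0 <= t0 -> is_solution rhs x t0 ->
     forall t, t0 <= t ->
       Rabs (x t) <= exp (ln (1 + 3 * PI / 2) + 1)
                     * exp (- (2 / (3 * PI)) * (t - t0)) * Rabs (x t0).
Proof.
  intros x t0 H0 Hsol t Ht.
  assert (key : W x t <= W x t0).
  { destruct (Req_dec t0 t) as [e|ne]. subst; lra.
    set (E := fun u => exp (-2 * G u)).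
    assert (HE : limit1_in E (fun s => t0 <= s) (E t0) t0).
    { apply cont_lim. apply derivable_continuous_pt.
      exists (exp (-2 * G t0) * (-2 * (/(1+t0) - t0*(cos t0)^2))).
      apply is_derive_Reals. apply E_der; auto. }
    destruct Hsol as [Hc Hd].
    pose proof (Hc t0 (Rle_refl _)) as Hx.
    pose proof (limit_mul _ _ _ _ _ _ (limit_mul _ _ _ _ _ _ Hx Hx) HE) as Hl.
    simpl in Hl.
    assert (W x t0 = x t0 * x t0 * E t0) by (unfold W, E; ring).
    rewrite H.
    apply (lim_ge (fun u => x u * x u * E u) t0 t); [lra| exact Hl |].
    intros s Hs. replace (x s * x s * E s) with (W x s) by (unfold W, E; ring).
    apply (mono x t0 s t); auto. split; auto. }
  unfold W in key.
  set (A := exp (G t - G t0)).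
  assert (HA : exp (-2 * G t0) = exp (-2 * G t) * (A * A)).
  { unfold A. rewrite <- !exp_plus. f_equal. ring. }
  rewrite HA in key.
  assert (0 < exp (-2 * G t)) by apply exp_pos.
  assert (0 < A) by apply exp_pos.
  assert (x t ^ 2 <= x t0 ^ 2 * (A * A)) by nra.
  rewrite <- (pow2_abs (x t)), <- (pow2_abs (x t0)) in H2.
  pose proof (Rabs_pos (x t)). pose proof (Rabs_pos (x t0)).
  assert (Rabs (x t) <= Rabs (x t0) * A).
  { destruct (Rle_lt_dec (Rabs (x t)) (Rabs (x t0) * A)) as [|Hl]; auto.
    assert (0 <= Rabs (x t0) * A) by nra.
    assert (Rabs (x t0) * A * (Rabs (x t0) * A) < Rabs (x t) * Rabs (x t)) by nra.
    simpl in H2. nra. }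
  pose proof (G_bound t0 t ltac:(lra)).
  assert (A <= exp (ln (1 + 3 * PI / 2) + 1 + - (2 / (3 * PI)) * (t - t0))).
  { unfold A. destruct (Req_dec (G t - G t0) (ln (1 + 3 * PI / 2) + 1 + - (2 / (3 * PI)) * (t - t0))) as [e|e].
    rewrite e; lra. left; apply exp_increasing; lra. }
  rewrite exp_plus in H7. nra.
Qed.

Theorem mainTheorem10 :
  (forall (x : R -> R) (t0 : R), 0 <= t0 -> is_solution rhs x t0 ->
     forall t, t0 <= t ->
       Rabs (x t) <= exp (ln (1 + 3 * PI / 2) + 1)
                     * exp (- (2 / (3 * PI)) * (t - t0)) * Rabs (x t0))
  /\ GUES rhs.
Proof.
  split. exact part1.
  exists (exp (ln (1 + 3 * PI / 2) + 1)), (2 / (3 * PI)).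
  split. apply exp_pos. split.
  { pose proof PI_RGT_0. unfold Rdiv; apply Rmult_lt_0_compat; [lra|]. apply Rinv_0_lt_compat; lra. }
  intros x t0 H0 Hs t Ht.
  pose proof (part1 x t0 H0 Hs t Ht). lra.
Qed.
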